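(* For every formula $\phi$, $\mathbf{GLP}\vdash[1]\phi$ if and only if $\mathbf{GLP}\vdash\phi\leftrightarrow(Q_k(\phi)\to\phi)$ for some $k\geq 1$.
   Context: $\mathbf{GLP}$ is the propositional polymodal logic with modalities $[0],[1],\dots$ ($\langle k\rangle:=\neg[k]\neg$) axiomatized by classical tautologies; $[k](\phi\to\psi)\to([k]\phi\to[k]\psi)$; $[k]([k]\phi\to\phi)\to[k]\phi$; $\langle j\rangle\phi\to[k]\langle j\rangle\phi$ for $j<k$; $[j]\phi\to[k]\phi$ for $j\leq k$; rules modus ponens and necessitation. Define $Q_1(\phi):=\phi$ and $Q_{i+1}(\phi):=\phi\lor[0]Q_i(\phi)$. *)

(* Defs.v *)
From Stdlib Require Import Arith.

Inductive form : Type :=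
| Var : nat -> form
| Bot : form
| Imp : form -> form -> form
| Box : nat -> form -> form.

Definition Neg (a : form) : form := Imp a Bot.
Definition Top : form := Neg Bot.
Definition Or (a b : form) : form := Imp (Neg a) b.
Definition And (a b : form) : form := Neg (Imp a (Neg b)).
Definition Iff (a b : form) : form := And (Imp a b) (Imp b a).
Definition Dia (k : nat) (a : form) : form := Neg (Box k (Neg a)).

(* Propositional valuation semantics, used to define classical tautologies
   (boxed subformulas are treated as atoms). *)
Fixpoint tval (v : nat -> bool) (w : nat -> form -> bool) (a : form) : bool :=
  match a with
  | Var n => v n
  | Bot => false
  | Imp a b => implb (tval v w a) (tval v w b)
  | Box k b => w k b
  end.

Definition tautology (a : form) : Prop :=
  forall (v : nat -> bool) (w : nat -> form -> bool), tval v w a = true.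

Inductive GLP : form -> Prop :=
| glp_taut : forall a, tautology a -> GLP a
| glp_K : forall k a b, GLP (Imp (Box k (Imp a b)) (Imp (Box k a) (Box k b)))
| glp_Lob : forall k a, GLP (Imp (Box k (Imp (Box k a) a)) (Box k a))
| glp_dia : forall j k a, j < k -> GLP (Imp (Dia j a) (Box k (Dia j a)))
| glp_mono : forall j k a, j <= k -> GLP (Imp (Box j a) (Box k a))
| glp_mp : forall a b, GLP (Imp a b) -> GLP a -> GLP b
| glp_nec : forall k a, GLP a -> GLP (Box k a).

(* Q 1 phi = phi, Q (i+1) phi = phi \/ [0] (Q i phi), matching the paper's Q_i
   for i >= 1. Q 0 phi is set to phi but never used (statement requires k >= 1). *)
Fixpoint Q (i : nat) (a : form) : form :=
  match i with
  | 0 => a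
  | 1 => a
  | S i' => Or a (Box 0 (Q i' a))
  end.

(* Main.v *)
Require Import Defs.
From Stdlib Require Import Arith Lia Classical ClassicalEpsilon Cantor.

Ltac taut_tac :=
  let v := fresh "v" in let w := fresh "w" in
  unfold tautology; intros v w; unfold Iff, Dia, Or, And, Top in *; unfold Neg in *; simpl;
  repeat match goal with
  | |- context [tval v w ?x] => destruct (tval v w x)
  | |- context [w ?k ?x] => destruct (w k x)
  end; reflexivity.

Lemma tmp1 a b : GLP a -> tautology (Imp a b) -> GLP b.
Proof. intros H T. exact (glp_mp _ _ (glp_taut _ T) H). Qed.
Lemma tmp2 a b c : GLP a -> GLP b -> tautology (Imp a (Imp b c)) -> GLP c.
Proof. intros H1 H2 T. exact (glp_mp _ _ (glp_mp _ _ (glp_taut _ T) H1) H2). Qed.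
Lemma tmp3 a b c d : GLP a -> GLP b -> GLP c -> tautology (Imp a (Imp b (Imp c d))) -> GLP d.
Proof. intros H1 H2 H3 T. exact (glp_mp _ _ (glp_mp _ _ (glp_mp _ _ (glp_taut _ T) H1) H2) H3). Qed.
Lemma tmp4 a b c d e : GLP a -> GLP b -> GLP c -> GLP d -> tautology (Imp a (Imp b (Imp c (Imp d e)))) -> GLP e.
Proof. intros H1 H2 H3 H4 T. exact (glp_mp _ _ (glp_mp _ _ (glp_mp _ _ (glp_mp _ _ (glp_taut _ T) H1) H2) H3) H4). Qed.
Lemma tmp5 a b c d e f : GLP a -> GLP b -> GLP c -> GLP d -> GLP e -> tautology (Imp a (Imp b (Imp c (Imp d (Imp e f))))) -> GLP f.
Proof. intros H1 H2 H3 H4 H5 T. exact (glp_mp _ _ (glp_mp _ _ (glp_mp _ _ (glp_mp _ _ (glp_mp _ _ (glp_taut _ T) H1) H2) H3) H4) H5). Qed.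

Lemma boxmono k a b : GLP (Imp a b) -> GLP (Imp (Box k a) (Box k b)).
Proof. intro H. exact (glp_mp _ _ (glp_K k a b) (glp_nec k _ H)). Qed.

Lemma boxmono2 k a b c : GLP (Imp a (Imp b c)) -> GLP (Imp (Box k a) (Imp (Box k b) (Box k c))).
Proof.
  intro H. pose proof (glp_mp _ _ (glp_K k a (Imp b c)) (glp_nec k _ H)) as H1.
  pose proof (glp_K k b c) as H2.
  apply (tmp2 _ _ _ H1 H2). taut_tac.
Qed.

Lemma four k a : GLP (Imp (Box k a) (Box k (Box k a))).
Proof.
  set (B := And (Box k a) a).
  assert (h1 : GLP (Imp (Box k B) (Box k a))) by (apply boxmono; apply glp_taut; unfold B; taut_tac).
  assert (h2 : GLP (Imp a (Imp (Box k B) B))) by (apply (tmp1 _ _ h1); unfold B; taut_tac).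
  pose proof (boxmono k _ _ h2) as h3.
  pose proof (glp_Lob k B) as h4.
  assert (h5 : GLP (Imp (Box k B) (Box k (Box k a)))) by (apply boxmono; apply glp_taut; unfold B; taut_tac).
  apply (tmp3 _ _ _ _ h3 h4 h5). taut_tac.
Qed.

Lemma diamono a b : GLP (Imp a b) -> GLP (Imp (Dia 0 a) (Dia 0 b)).
Proof.
  intro H. assert (H1 : GLP (Imp (Neg b) (Neg a))) by (apply (tmp1 _ _ H); taut_tac).
  pose proof (boxmono 0 _ _ H1) as H2. apply (tmp1 _ _ H2). taut_tac.
Qed.

Lemma refl1 a : GLP (Box 1 (Imp (Box 0 a) a)).
Proof.
  pose proof (glp_mono 0 1 a ltac:(lia)) as h1.
  assert (h2 : GLP (Imp (Box 1 a) (Box 1 (Imp (Box 0 a) a)))) by (apply boxmono; apply glp_taut; taut_tac).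
  pose proof (glp_dia 0 1 (Neg a) ltac:(lia)) as h3.
  assert (h4 : GLP (Imp (Box 0 (Neg (Neg a))) (Box 0 a))) by (apply boxmono; apply glp_taut; taut_tac).
  assert (h5 : GLP (Imp (Box 0 a) (Box 0 (Neg (Neg a))))) by (apply boxmono; apply glp_taut; taut_tac).
  assert (h6 : GLP (Imp (Dia 0 (Neg a)) (Imp (Box 0 a) a))) by (apply (tmp1 _ _ h5); taut_tac).
  pose proof (boxmono 1 _ _ h6) as h7.
  apply (tmp5 _ _ _ _ _ _ h1 h2 h3 h4 h7). taut_tac.
Qed.

Lemma Q1 phi : forall k, GLP (Box 1 (Imp (Q (S k) phi) phi)).
Proof.
  induction k.
  - simpl. apply glp_nec. apply glp_taut. taut_tac.
  - change (Q (S (S k)) phi) with (Or phi (Box 0 (Q (S k) phi))).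
    pose proof (refl1 (Q (S k) phi)) as R.
    assert (T : GLP (Imp (Imp (Q (S k) phi) phi) (Imp (Imp (Box 0 (Q (S k) phi)) (Q (S k) phi)) (Imp (Or phi (Box 0 (Q (S k) phi))) phi))))
      by (apply glp_taut; taut_tac).
    pose proof (boxmono2 1 _ _ _ T) as T2.
    apply (tmp3 _ _ _ _ IHk R T2). taut_tac.
Qed.

Fixpoint C (ps : form) (n : nat) (th : form) : form :=
  match n with 0 => th | S n => And ps (Dia 0 (C ps n th)) end.
Definition Cons (a : form) : Prop := ~ GLP (Neg a).
Definition Good (ps th : form) : Prop := forall n, Cons (C ps n th).

Lemma C_mono ps n a b : GLP (Imp a b) -> GLP (Imp (C ps n a) (C ps n b)).
Proof.
  intro H. induction n; simpl; auto.
  pose proof (diamono _ _ IHn) as H1. apply (tmp1 _ _ H1). taut_tac.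
Qed.

Lemma Cons_mono a b : GLP (Imp a b) -> Cons a -> Cons b.
Proof. intros H Ca Nb. apply Ca. apply (tmp2 _ _ _ H Nb). taut_tac. Qed.

Lemma Good_mono ps a b : GLP (Imp a b) -> Good ps a -> Good ps b.
Proof. intros H G n. apply (Cons_mono _ _ (C_mono ps n _ _ H)). apply G. Qed.

Lemma dia_or x y z : GLP (Imp x (Or y z)) -> GLP (Imp (Dia 0 x) (Or (Dia 0 y) (Dia 0 z))).
Proof.
  intro H. assert (H1 : GLP (Imp (Neg y) (Imp (Neg z) (Neg x)))) by (apply (tmp1 _ _ H); taut_tac).
  pose proof (boxmono2 0 _ _ _ H1) as H2. apply (tmp1 _ _ H2). taut_tac.
Qed.

Lemma C_or ps n a b : GLP (Imp (C ps n (Or a b)) (Or (C ps n a) (C ps n b))).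
Proof.
  induction n; simpl.
  - apply glp_taut; taut_tac.
  - pose proof (dia_or _ _ _ IHn) as H. apply (tmp1 _ _ H). taut_tac.
Qed.

Lemma Cons_or a b : Cons (Or a b) -> Cons a \/ Cons b.
Proof.
  intro H. destruct (classic (Cons a)) as [Ha|Ha]; auto.
  destruct (classic (Cons b)) as [Hb|Hb]; auto.
  exfalso. unfold Cons in *. apply NNPP in Ha. apply NNPP in Hb.
  apply H. apply (tmp2 _ _ _ Ha Hb). taut_tac.
Qed.

Lemma C_succ ps n th : Cons (C ps (S n) th) -> Cons (C ps n th).
Proof.
  intros H N. apply H. simpl. pose proof (glp_nec 0 _ N) as N1.
  apply (tmp1 _ _ N1). taut_tac.
Qed.

Lemma C_le ps m n th : m <= n -> Cons (C ps n th) -> Cons (C ps m th).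
Proof. induction 1; auto. intro H'. apply IHle. apply C_succ. exact H'. Qed.

Lemma Good_or ps a b : Good ps (Or a b) -> Good ps a \/ Good ps b.
Proof.
  intro H. destruct (classic (Good ps a)) as [Ha|Ha]; auto.
  destruct (classic (Good ps b)) as [Hb|Hb]; auto.
  exfalso. apply not_all_ex_not in Ha. apply not_all_ex_not in Hb.
  destruct Ha as [n1 Ha]. destruct Hb as [n2 Hb].
  pose proof (Cons_mono _ _ (C_or ps (max n1 n2) a b) (H (max n1 n2))) as H1.
  destruct (Cons_or _ _ H1) as [H2|H2].
  - apply Ha. apply (C_le _ _ _ _ (Nat.le_max_l n1 n2) H2).
  - apply Hb. apply (C_le _ _ _ _ (Nat.le_max_r n1 n2) H2).
Qed.

Lemma Good_bot ps : ~ Good ps Bot.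
Proof. intro H. apply (H 0). simpl. apply glp_taut. taut_tac. Qed.

Lemma Good_cons ps a : Good ps a -> Cons a.
Proof. intro H. exact (H 0). Qed.

Lemma C_shift ps n d : C ps n (C ps 1 d) = C ps (S n) d.
Proof. induction n; simpl; auto. simpl in IHn. rewrite IHn. reflexivity. Qed.

Fixpoint enc (f : form) : nat :=
  match f with
  | Var n => to_nat (0, n)
  | Bot => to_nat (1, 0)
  | Imp a b => to_nat (2, to_nat (enc a, enc b))
  | Box k a => to_nat (3, to_nat (k, enc a))
  end.

Lemma to_nat_inj p q : to_nat p = to_nat q -> p = q.
Proof. intro H. rewrite <- (cancel_of_to p), <- (cancel_of_to q), H. reflexivity. Qed.

Lemma enc_inj : forall f g, enc f = enc g -> f = g.
Proof.
  induction f; destruct g; intro H; cbn [enc] in H; apply to_nat_inj in H; try discriminate;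
  try reflexivity.
  - injection H; intros; subst; auto.
  - apply (f_equal snd) in H; cbn [snd] in H; apply to_nat_inj in H.
    injection H; intros; f_equal; auto.
  - apply (f_equal snd) in H; cbn [snd] in H; apply to_nat_inj in H.
    injection H; intros; subst; f_equal; auto.
Qed.

Definition dec (n : nat) : form :=
  match excluded_middle_informative (exists f, enc f = n) with
  | left H => proj1_sig (constructive_indefinite_description _ H)
  | right _ => Bot
  end.

Lemma dec_enc f : dec (enc f) = f.
Proof.
  unfold dec. destruct (excluded_middle_informative _) as [H|H].
  - destruct (constructive_indefinite_description _ H) as [g Hg]. simpl. apply enc_inj; auto.
  - exfalso. apply H. exists f. auto.
Qed.

Record LProp (P : form -> Prop) : Prop := {
  lp_mono : forall a b, GLP (Imp a b) -> P a -> P b;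
  lp_prime : forall a b, P (Or a b) -> P a \/ P b;
  lp_bot : ~ P Bot }.

Fixpoint lseq (P : form -> Prop) (th0 : form) (n : nat) : form :=
  match n with
  | 0 => th0
  | S n => let s := lseq P th0 n in
           if excluded_middle_informative (P (And s (dec n))) then And s (dec n)
           else And s (Neg (dec n))
  end.

Definition lind (P : form -> Prop) (th0 : form) (x : form) : Prop :=
  exists n, GLP (Imp (lseq P th0 n) x).

Section L.
Lemma lseq_P P th0 (LP : LProp P) (H0 : P th0) : forall n, P (lseq P th0 n).
Proof.
  induction n; simpl; auto.
  destruct (excluded_middle_informative _) as [H|H]; auto.
  assert (H1 : P (Or (And (lseq P th0 n) (dec n)) (And (lseq P th0 n) (Neg (dec n))))).
  { apply (lp_mono P LP (lseq P th0 n)); [apply glp_taut; taut_tac | exact IHn]. }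
  destruct (lp_prime P LP _ _ H1); tauto.
Qed.

Lemma lseq_mono P th0 : forall n m, n <= m -> GLP (Imp (lseq P th0 m) (lseq P th0 n)).
Proof.
  intros n m Hle. induction Hle.
  - apply glp_taut; taut_tac.
  - assert (H : GLP (Imp (lseq P th0 (S m)) (lseq P th0 m))).
    { simpl. destruct (excluded_middle_informative _); apply glp_taut; taut_tac. }
    apply (tmp2 _ _ _ H IHHle). taut_tac.
Qed.
End L.

Lemma lind_P P th0 (LP : LProp P) (H0 : P th0) x : lind P th0 x -> P x.
Proof. intros [n Hn]. apply (lp_mono P LP _ _ Hn). apply lseq_P; auto. Qed.

Lemma lind_thm P th0 x : GLP x -> lind P th0 x.
Proof. intro H. exists 0. apply (tmp1 _ _ H). taut_tac. Qed.

Lemma lind_seed P th0 : lind P th0 th0.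
Proof. exists 0. apply glp_taut. taut_tac. Qed.

Lemma lind_mp P th0 a b : lind P th0 (Imp a b) -> lind P th0 a -> lind P th0 b.
Proof.
  intros [n1 H1] [n2 H2]. exists (max n1 n2).
  pose proof (lseq_mono P th0 _ _ (Nat.le_max_l n1 n2)) as M1.
  pose proof (lseq_mono P th0 _ _ (Nat.le_max_r n1 n2)) as M2.
  apply (tmp4 _ _ _ _ _ H1 H2 M1 M2). taut_tac.
Qed.

Lemma lind_compl P th0 x : lind P th0 x \/ lind P th0 (Neg x).
Proof.
  destruct (excluded_middle_informative (P (And (lseq P th0 (enc x)) (dec (enc x))))) as [H|H];
  [left|right]; exists (S (enc x)); simpl;
  destruct (excluded_middle_informative _); try contradiction; rewrite dec_enc; apply glp_taut; taut_tac.
Qed.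

Lemma lind_cons P th0 (LP : LProp P) (H0 : P th0) x : lind P th0 x -> lind P th0 (Neg x) -> False.
Proof.
  intros H1 H2. apply (lp_bot P LP). apply (lind_P P th0 LP H0). apply (lind_mp _ _ _ _ H2 H1).
Qed.

Definition Pnext ps (D : form -> Prop) th := forall d, D d -> Good ps (And th (Dia 0 d)).
Fixpoint Dl ps k : form -> Prop :=
  match k with 0 => lind (Good ps) ps | S k => lind (Pnext ps (Dl ps k)) ps end.
Definition Pk ps k := match k with 0 => Good ps | S k => Pnext ps (Dl ps k) end.
Lemma Dl_eq ps k : Dl ps k = lind (Pk ps k) ps.
Proof. destruct k; reflexivity. Qed.

Lemma chain_inv ps (G : Good ps ps) : forall k,
  LProp (Pk ps k) /\ Pk ps k ps /\ (forall th, Pk ps k th -> Good ps th).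
Proof.
  induction k.
  - split; [|split; auto]. constructor.
    + apply Good_mono. + apply Good_or. + apply Good_bot.
  - destruct IHk as [LP [Hps HG]].
    assert (Dthm : forall x, GLP x -> Dl ps k x) by (intros; rewrite Dl_eq; apply lind_thm; auto).
    assert (Dmp : forall a b, Dl ps k (Imp a b) -> Dl ps k a -> Dl ps k b)
      by (intros a b; rewrite Dl_eq; apply lind_mp).
    assert (Dand : forall a b, Dl ps k a -> Dl ps k b -> Dl ps k (And a b)).
    { intros a b Ha Hb. refine (Dmp _ _ (Dmp _ _ (Dthm (Imp a (Imp b (And a b))) _) Ha) Hb).
      apply glp_taut; taut_tac. }
    assert (DG : forall x, Dl ps k x -> Good ps x).
    { intros x Hx. apply HG. rewrite Dl_eq in Hx. apply (lind_P _ _ LP Hps _ Hx). }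
    assert (DT : Dl ps k Top) by (apply Dthm; apply glp_taut; taut_tac).
    simpl. split; [|split].
    + constructor.
      * intros a b H Pa d Dd. apply (Good_mono ps (And a (Dia 0 d))); [|apply Pa; auto].
        apply (tmp1 _ _ H). taut_tac.
      * intros a b Hab. apply NNPP. intro Hn. apply not_or_and in Hn. destruct Hn as [Na Nb].
        unfold Pnext in Na, Nb.
        apply not_all_ex_not in Na. destruct Na as [d1 Na]. apply imply_to_and in Na. destruct Na as [D1 Na].
        apply not_all_ex_not in Nb. destruct Nb as [d2 Nb]. apply imply_to_and in Nb. destruct Nb as [D2 Nb].
        pose proof (Hab (And d1 d2) (Dand _ _ D1 D2)) as H.
        assert (H' : Good ps (Or (And a (Dia 0 (And d1 d2))) (And b (Dia 0 (And d1 d2))))).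
        { apply (Good_mono ps (And (Or a b) (Dia 0 (And d1 d2)))); [apply glp_taut; taut_tac | exact H]. }
        assert (E1 : GLP (Imp (Dia 0 (And d1 d2)) (Dia 0 d1))) by (apply diamono; apply glp_taut; taut_tac).
        assert (E2 : GLP (Imp (Dia 0 (And d1 d2)) (Dia 0 d2))) by (apply diamono; apply glp_taut; taut_tac).
        destruct (Good_or _ _ _ H') as [Ha|Hb].
        -- apply Na. apply (Good_mono ps (And a (Dia 0 (And d1 d2)))); [apply (tmp1 _ _ E1); taut_tac | exact Ha].
        -- apply Nb. apply (Good_mono ps (And b (Dia 0 (And d1 d2)))); [apply (tmp1 _ _ E2); taut_tac | exact Hb].
      * intro H. apply (Good_bot ps). apply (Good_mono ps (And Bot (Dia 0 Top))); [apply glp_taut; taut_tac|].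
        apply H. auto.
    + intros d Dd. change (And ps (Dia 0 d)) with (C ps 1 d). intro n. rewrite C_shift.
      apply (DG d Dd (S n)).
    + intros th H. apply (Good_mono ps (And th (Dia 0 Top))); [apply glp_taut; taut_tac|]. apply H. auto.
Qed.

Section D.
Lemma D_thm ps k x : GLP x -> Dl ps k x.
Proof. intros; rewrite Dl_eq; apply lind_thm; auto. Qed.
Lemma D_mp ps k a b : Dl ps k (Imp a b) -> Dl ps k a -> Dl ps k b.
Proof. rewrite Dl_eq; apply lind_mp. Qed.
Lemma D_compl ps k x : Dl ps k x \/ Dl ps k (Neg x).
Proof. rewrite Dl_eq; apply lind_compl. Qed.
Lemma D_cons ps (G : Good ps ps) k x : Dl ps k x -> Dl ps k (Neg x) -> False.
Proof. destruct (chain_inv ps G k) as [LP [Hps _]]. rewrite Dl_eq. apply (lind_cons _ _ LP Hps). Qed.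
Lemma D_seed ps k : Dl ps k ps.
Proof. rewrite Dl_eq; apply lind_seed. Qed.
Lemma D_imp ps k a b : GLP (Imp a b) -> Dl ps k a -> Dl ps k b.
Proof. intros H Ha. apply (D_mp _ _ _ _ (D_thm _ _ _ H) Ha). Qed.
End D.

Lemma R0 ps (G : Good ps ps) k x : Dl ps (S k) (Box 0 x) -> Dl ps k x.
Proof.
  intro H. destruct (D_compl ps k x) as [Hx|Hx]; auto. exfalso.
  destruct (chain_inv ps G (S k)) as [LP [Hps _]].
  pose proof (lind_P _ _ LP Hps _ H) as P. simpl in P.
  pose proof (P _ Hx) as Gd. apply (Good_cons _ _ Gd).
  assert (h : GLP (Imp (Box 0 x) (Box 0 (Neg (Neg x))))) by (apply boxmono; apply glp_taut; taut_tac).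
  apply (tmp1 _ _ h). taut_tac.
Qed.

Lemma dia_step ps (G : Good ps ps) k a : Dl ps k a \/ Dl ps k (Dia 0 a) -> Dl ps (S k) (Dia 0 a).
Proof.
  intro H. destruct (D_compl ps (S k) (Dia 0 a)) as [Hx|Hx]; auto. exfalso.
  pose proof (four 0 (Neg a)) as F.
  assert (h1 : GLP (Imp (Neg (Dia 0 a)) (Box 0 (Box 0 (Neg a))))) by (apply (tmp1 _ _ F); taut_tac).
  assert (h2 : GLP (Imp (Neg (Dia 0 a)) (Box 0 (Neg a)))) by (apply glp_taut; taut_tac).
  pose proof (R0 ps G k _ (D_imp _ _ _ _ h1 Hx)) as B.
  pose proof (R0 ps G k _ (D_imp _ _ _ _ h2 Hx)) as N.
  destruct H as [H|H].
  - apply (D_cons ps G k a H N).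
  - apply (D_cons ps G k _ B H).
Qed.

Lemma dia_up ps (G : Good ps ps) k a : Dl ps k a \/ Dl ps k (Dia 0 a) -> forall j, Dl ps (S k + j) (Dia 0 a).
Proof.
  intros H j. induction j.
  - rewrite Nat.add_0_r. apply dia_step; auto.
  - rewrite Nat.add_succ_r. apply dia_step; auto.
Qed.

Fixpoint ev ps (f : form) : Prop :=
  match f with
  | Var _ => False
  | Bot => False
  | Imp a b => ev ps a -> ev ps b
  | Box n a => match n with
               | 0 => forall k, Dl ps k a /\ Dl ps k (Box 0 a)
               | 1 => exists m, forall k, m <= k -> Dl ps k a /\ Dl ps k (Box 1 a)
               | _ => True
               end
  end.

Definition W ps (k : nat) (b : form) : bool :=
  if excluded_middle_informative (ev ps (Box k b)) then true else false.

Lemma ev_tval ps : forall f, ev ps f <-> tval (fun _ => false) (W ps) f = true.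
Proof.
  induction f; simpl.
  - split; [contradiction | discriminate].
  - split; [contradiction | discriminate].
  - rewrite IHf1, IHf2. destruct (tval _ _ f1), (tval _ _ f2); simpl; intuition.
  - unfold W. destruct (excluded_middle_informative _) as [H|H]; simpl in H; split; auto; try discriminate;
    intro; contradiction.
Qed.

Lemma sound ps (G : Good ps ps) : forall f, GLP f -> ev ps f.
Proof.
  induction 1.
  - apply ev_tval. apply H.
  - destruct k as [|[|k]]; simpl; auto.
    + intros H1 H2 j. destruct (H1 j) as [A B]. destruct (H2 j) as [C1 D1]. split.
      * apply (D_mp _ _ _ _ A C1).
      * apply (D_mp _ _ _ _ (D_mp _ _ _ _ (D_thm _ _ _ (glp_K 0 a b)) B) D1).
    + intros [m1 H1] [m2 H2]. exists (max m1 m2). intros j Hj.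
      destruct (H1 j ltac:(lia)) as [A B]. destruct (H2 j ltac:(lia)) as [C1 D1]. split.
      * apply (D_mp _ _ _ _ A C1).
      * apply (D_mp _ _ _ _ (D_mp _ _ _ _ (D_thm _ _ _ (glp_K 1 a b)) B) D1).
  - destruct k as [|[|k]]; simpl; auto.
    + intros H j. destruct (H j) as [A B].
      assert (C1 : Dl ps j (Box 0 a)) by apply (D_mp _ _ _ _ (D_thm _ _ _ (glp_Lob 0 a)) B).
      split; auto. apply (D_mp _ _ _ _ A C1).
    + intros [m H]. exists m. intros j Hj. destruct (H j Hj) as [A B].
      assert (C1 : Dl ps j (Box 1 a)) by apply (D_mp _ _ _ _ (D_thm _ _ _ (glp_Lob 1 a)) B).
      split; auto. apply (D_mp _ _ _ _ A C1).
  - destruct k as [|[|k]]; [lia| |simpl; auto].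
    destruct j as [|j]; [|lia].
    unfold Dia, Neg. simpl. intro H0.
    apply not_all_ex_not in H0. destruct H0 as [k0 H0].
    assert (E : Dl ps k0 a \/ Dl ps k0 (Dia 0 a)).
    { destruct (D_compl ps k0 a) as [X|X]; auto.
      destruct (D_compl ps k0 (Box 0 (Neg a))) as [Y|Y]; auto. exfalso. apply H0. split; auto. }
    exists (S k0). intros j Hj.
    assert (Hd : Dl ps j (Dia 0 a)).
    { replace j with (S k0 + (j - S k0)) by lia. apply dia_up; auto. }
    split; [exact Hd|]. apply (D_mp _ _ _ _ (D_thm _ _ _ (glp_dia 0 1 a ltac:(lia))) Hd).
  - destruct k as [|[|k]]; [|simpl; auto..].
    + destruct j; [|lia]. simpl; auto.
    + destruct j as [|[|j]]; [|simpl; auto|lia].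
      simpl. intro H0. exists 0. intros j _. destruct (H0 j) as [A B]. split; auto.
      apply (D_mp _ _ _ _ (D_thm _ _ _ (glp_mono 0 1 a ltac:(lia))) B).
  - simpl in IHGLP1. auto.
  - destruct k as [|[|k]]; simpl; auto.
    + intro j. split; apply D_thm; auto. apply glp_nec; auto.
    + exists 0. intros j _. split; apply D_thm; auto. apply glp_nec; auto.
Qed.

Lemma negC_Q phi : forall n, GLP (Imp (Neg (C (Neg phi) n (Neg phi))) (Q (S n) phi)).
Proof.
  induction n.
  - simpl. apply glp_taut. taut_tac.
  - change (Q (S (S n)) phi) with (Or phi (Box 0 (Q (S n) phi))).
    pose proof (boxmono 0 _ _ IHn) as H.
    change (C (Neg phi) (S n) (Neg phi)) with (And (Neg phi) (Dia 0 (C (Neg phi) n (Neg phi)))).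
    apply (tmp1 _ _ H). generalize (Q (S n) phi). intro q. taut_tac.
Qed.

Theorem mainTheorem16 : forall phi : form,
  GLP (Box 1 phi) <->
  exists k : nat, 1 <= k /\ GLP (Iff phi (Imp (Q k phi) phi)).
Proof.
  intro phi. split.
  - intro H1. apply NNPP. intro Hn.
    assert (G : Good (Neg phi) (Neg phi)).
    { intros n Hc. apply Hn. exists (S n). split; [lia|].
      pose proof (glp_mp _ _ (negC_Q phi n) Hc) as HQ. apply (tmp1 _ _ HQ). taut_tac. }
    pose proof (sound _ G _ H1) as E. simpl in E. destruct E as [m Hm].
    destruct (Hm m (le_n m)) as [Hp _].
    apply (D_cons _ G m phi Hp (D_seed _ _)).
  - intros [k [Hk HI]]. destruct k as [|k]; [lia|].
    pose proof (Q1 phi k) as HQ.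
    assert (H : GLP (Imp (Imp (Q (S k) phi) phi) phi)) by (apply (tmp1 _ _ HI); taut_tac).
    exact (glp_mp _ _ (boxmono 1 _ _ H) HQ).
Qed.
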